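(* Let $\tau$ be a primitive substitution with fixed point $X_\tau$. Then for any two non-empty prefixes $u,v$ of $X_\tau$, the return substitutions $\tau_u$ and $\tau_v$ have the same non-zero eigenvalues.
   Context: A substitution is a triple $(\tau,A,a)$: $A$ a finite alphabet, $\tau:A\to A^+$ a morphism (extended by concatenation), $a\in A$ with $\tau(a)$ starting with $a$; its fixed point $X_\tau$ is the unique sequence starting with $a$ with $\tau(X_\tau)=X_\tau$. Its matrix $M_\tau$ has $(i,j)$ entry the number of occurrences of $i$ in $\tau(j)$; eigenvalues of a substitution (or morphism $B\to B^+$) mean eigenvalues of its matrix. $\tau$ is primitive if some power of $M_\tau$ is positive; then $X_\tau$ is uniformly recurrent. For a non-empty prefix $u$ of $X_\tau$, a return word on $u$ is a factor $X_{[i,j-1]}$ where $i<j$ are successive occurrences of $u$; there are finitely many, and $X_\tau$ factors uniquely as a concatenation $m_0m_1\cdots$ of return words. Enumerating return words in order of first appearance gives a bijection $\Theta_u$ from $R_u=\{1,\dots,N\}$ to the return words, extended to an injective morphism $R_u^*\to A^*$. The return substitution on $u$ is the unique morphism $\tau_u:R_u\to R_u^+$ with $\Theta_u\tau_u=\tau\Theta_u$. *)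

(* Defs.v *)
From HB Require Import structures.
From mathcomp Require Import all_boot all_order all_algebra all_field.
Set Implicit Arguments. Unset Strict Implicit. Unset Printing Implicit Defensive.
Import GRing.Theory Num.Theory.
Local Open Scope ring_scope.

Definition slice (A : Type) (X : nat -> A) (p n : nat) : seq A :=
  mkseq (fun k => X (p + k)) n.

Definition occurs (A : eqType) (X : nat -> A) (u : seq A) (p : nat) : bool :=
  slice X p (size u) == u.

Definition return_at (A : eqType) (X : nat -> A) (u : seq A) (p : nat) (w : seq A) : Prop :=
  [/\ occurs X u p, (0 < size w)%N, occurs X u (p + size w),
      (forall k, (0 < k < size w)%N -> ~~ occurs X u (p + k)) &
      w = slice X p (size w)].

Definition is_return_word (A : eqType) (X : nat -> A) (u : seq A) (w : seq A) : Prop :=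
  exists p, return_at X u p w.

(* theta : R_u = 'I_N -> return words, bijective, enumerating return words
   in order of first appearance in the decomposition X = m0 m1 ... *)
Definition return_enum (A : eqType) (X : nat -> A) (u : seq A) (N : nat)
    (theta : 'I_N -> seq A) : Prop :=
  [/\ injective theta,
      (forall w, is_return_word X u w <-> exists i, theta i = w) &
      (forall i j : 'I_N, (i < j)%N ->
         exists p, return_at X u p (theta i) /\
           forall q, return_at X u q (theta j) -> (p < q)%N)].

Definition return_subst (A : Type) (N : nat) (theta : 'I_N -> seq A)
    (tau : A -> seq A) (sigma : 'I_N -> seq 'I_N) : Prop :=
  forall i, flatten (map theta (sigma i)) = flatten (map tau (theta i)).

Definition subst_matrix (A : finType) (tau : A -> seq A) : 'M[int]_#|A| :=
  \matrix_(i, j) (count_mem (enum_val i) (tau (enum_val j)))%:Z.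

Definition primitive (A : finType) (tau : A -> seq A) : Prop :=
  exists k : nat, forall i j, 0 < (subst_matrix tau ^+ k) i j.

Definition is_fixed_point (A : eqType) (tau : A -> seq A) (a : A) (X : nat -> A) : Prop :=
  X 0 = a /\
  forall n, flatten (map tau (mkseq X n)) =
            mkseq X (size (flatten (map tau (mkseq X n)))).

Definition ret_matrix (N : nat) (sigma : 'I_N -> seq 'I_N) : 'M[algC]_N :=
  \matrix_(i, j) (count_mem i (sigma j))%:R.

(* Main.v *)
Require Import Defs.
From HB Require Import structures.
From mathcomp Require Import all_boot all_order all_algebra all_field.
From mathcomp Require Import zify.
Local Open Scope ring_scope.
Import Order.TTheory GRing.Theory Num.Theory.
Set Implicit Arguments. Unset Strict Implicit.

Lemma size_slice (A : Type) (X : nat -> A) p n : size (slice X p n) = n.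
Proof. by rewrite /slice size_mkseq. Qed.

Lemma nth_slice (A : Type) (X : nat -> A) x0 p n k :
  (k < n)%N -> nth x0 (slice X p n) k = X (p + k)%N.
Proof. by move=> hk; rewrite /slice nth_mkseq. Qed.

Lemma slice_cat (A : Type) (X : nat -> A) p n1 n2 :
  slice X p (n1 + n2) = slice X p n1 ++ slice X (p + n1) n2.
Proof.
apply: (@eq_from_nth _ (X 0%N)); first by rewrite size_cat !size_slice.
move=> k; rewrite size_slice => hk; rewrite nth_cat size_slice nth_slice //.
case: ltnP => h; first by rewrite nth_slice.
rewrite nth_slice; last by lia.
congr X; lia.
Qed.

Lemma slice0 (A : Type) (X : nat -> A) n : slice X 0 n = mkseq X n.
Proof. by apply: eq_mkseq. Qed.

Lemma mkseq_add (A : Type) (X : nat -> A) p l :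
  mkseq X (p + l) = mkseq X p ++ slice X p l.
Proof. by rewrite -!slice0 slice_cat. Qed.

Lemma occursP (A : eqType) (X : nat -> A) x0 v p :
  occurs X v p <-> (forall k, (k < size v)%N -> X (p + k)%N = nth x0 v k).
Proof.
split.
  by move=> /eqP E k hk; rewrite -E nth_slice.
move=> H; apply/eqP/(@eq_from_nth _ x0); first by rewrite size_slice.
by move=> k; rewrite size_slice => hk; rewrite nth_slice // H.
Qed.

Definition Tm (A : Type) (tau : A -> seq A) (w : seq A) := flatten (map tau w).
Definition Tk (A : Type) (tau : A -> seq A) k := iter k (Tm tau).

Lemma Tk_nil (A : Type) (tau : A -> seq A) k : Tk tau k [::] = [::].
Proof. by elim: k => //= k IH; rewrite IH. Qed.

Lemma Tk_cat (A : Type) (tau : A -> seq A) k s t :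
  Tk tau k (s ++ t) = Tk tau k s ++ Tk tau k t.
Proof. elim: k => //= k IH; by rewrite IH /Tm map_cat flatten_cat. Qed.

Lemma size_Tm (A : eqType) (tau : A -> seq A) (Hne : forall b, tau b != [::]) s :
  (size s <= size (Tm tau s))%N.
Proof.
elim: s => //= b s IH; rewrite /Tm /= size_cat.
have := Hne b; case: (tau b) => //= c r _; rewrite -/(Tm tau s); lia.
Qed.

Lemma size_Tk (A : eqType) (tau : A -> seq A) (Hne : forall b, tau b != [::]) k s :
  (size s <= size (Tk tau k s))%N.
Proof. elim: k => //= k IH; exact: leq_trans IH (size_Tm Hne _). Qed.

Lemma Tk_fix (A : eqType) (tau : A -> seq A) a X (Hfix : is_fixed_point tau a X) k n :
  Tk tau k (mkseq X n) = mkseq X (size (Tk tau k (mkseq X n))).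
Proof.
elim: k => [|k IH]; first by rewrite /= size_mkseq.
rewrite [LHS]/= IH; case: Hfix => _ H; rewrite {1}/Tm H.
by rewrite -IH.
Qed.

Lemma Tk_slice (A : eqType) (tau : A -> seq A) a X (Hfix : is_fixed_point tau a X) k p l :
  Tk tau k (slice X p l) =
  slice X (size (Tk tau k (mkseq X p))) (size (Tk tau k (slice X p l))).
Proof.
have E := Tk_fix Hfix k (p + l); rewrite mkseq_add Tk_cat in E.
apply: (@eq_from_nth _ a); first by rewrite size_slice.
move=> i hi.
rewrite nth_slice //.
have := congr1 (fun s => nth a s (size (Tk tau k (mkseq X p)) + i)%N) E.
rewrite nth_cat ltnNge leq_addr /= addKn => ->.
by rewrite nth_mkseq // size_cat; lia.
Qed.

Lemma Lk_add (A : Type) (tau : A -> seq A) (X : nat -> A) k p l :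
  size (Tk tau k (mkseq X (p + l))) =
  (size (Tk tau k (mkseq X p)) + size (Tk tau k (slice X p l)))%N.
Proof. by rewrite mkseq_add Tk_cat size_cat. Qed.


Lemma decomp (A : eqType) (X : nat -> A) (v : seq A) N (th : 'I_N -> seq A)
  (Hth : return_enum X v th) len P :
  occurs X v P -> occurs X v (P + len) ->
  exists s, flatten (map th s) = slice X P len.
Proof.
case: Hth => _ Hrw _.
elim: len {-2}len (leqnn len) P => [|L IH] len Hlen P oP oPl.
  by exists [::]; move: Hlen; rewrite leqn0 => /eqP ->.
case: (posnP len) => [->|lpos]; first by exists [::].
pose Q d := (0 < d)%N && occurs X v (P + d).
have exQ : exists d, Q d by exists len; rewrite /Q lpos.
case: (ex_minnP exQ) => d /andP [dpos oPd] mind.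
have dle : (d <= len)%N by apply: mind; rewrite /Q lpos.
have [j thj] : exists j, th j = slice X P d.
  apply/Hrw; exists P; split => //; rewrite ?size_slice //.
  move=> k /andP [k0 kd]; apply/negP => ok.
  by have := mind k; rewrite /Q k0 ok => /(_ isT); rewrite leqNgt kd.
have [s' Hs'] := IH (len - d)%N ltac:(lia) (P + d)%N oPd
  ltac:(by rewrite -addnA subnKC).
exists (j :: s'); rewrite /= thj Hs' -slice_cat subnKC //.
Qed.

Lemma rw_nth (A : eqType) (X : nat -> A) x0 (v : seq A) p w :
  return_at X v p w ->
  forall k, (k < size w + size v)%N -> nth x0 (w ++ v) k = X (p + k)%N.
Proof.
case=> o1 wpos o2 _ ew k hk; rewrite nth_cat.
case: ltnP => h.
  by rewrite ew nth_slice.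
move/(occursP _ x0): o2 => /(_ (k - size w)%N ltac:(lia)) <-.
congr X; lia.
Qed.

Lemma pref_nth (A : eqType) (X : nat -> A) x0 (v : seq A) N (th : 'I_N -> seq A)
  (Hth : return_enum X v th) s k :
  (k < size v)%N -> nth x0 (flatten (map th s) ++ v) k = nth x0 v k.
Proof.
case: Hth => _ Hrw _.
elim: s k => //= i s IH k hk.
have [q rq] : exists q, return_at X v q (th i) by apply/Hrw; exists i.
have o1 := rq; case: o1 => o1 _ _ _ _.
move/(occursP _ x0): (o1) => Ho1.
rewrite -catA nth_cat; case: ltnP => h.
  rewrite -Ho1 // -(rw_nth x0 rq) ?nth_cat ?h //; lia.
rewrite IH; last by lia.
by rewrite -[RHS]Ho1 // -(rw_nth x0 rq) ?nth_cat ?ltnNge ?h //; lia.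
Qed.

Lemma no_lt (A : eqType) (X : nat -> A) (v : seq A) N (th : 'I_N -> seq A)
  (Hth : return_enum X v th) i j s t :
  (size (th i) < size (th j))%N ->
  th i ++ flatten (map th s) = th j ++ flatten (map th t) -> False.
Proof.
move=> hlt E.
have Hth' := Hth; case: Hth' => _ Hrw _.
have [q rq] : exists q, return_at X v q (th j) by apply/Hrw; exists j.
have [q' rq'] : exists q, return_at X v q (th i) by apply/Hrw; exists i.
have ipos : (0 < size (th i))%N by case: rq'.
case: (rq) => _ _ _ Hno _.
have E' : th i ++ (flatten (map th s) ++ v) = th j ++ (flatten (map th t) ++ v)
  by rewrite !catA E.
case/negP: (Hno (size (th i)) ltac:(apply/andP; split => //)).
apply/(occursP _ (X 0%N)) => k hk.
have := congr1 (fun w => nth (X 0%N) w (size (th i) + k)%N) E'.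
rewrite nth_cat ltnNge leq_addr /= addKn (pref_nth _ Hth) //.
rewrite nth_cat; case: ltnP => h.
  move=> ->; rewrite -addnA -(rw_nth (X 0%N) rq) ?nth_cat ?h //; lia.
rewrite (pref_nth _ Hth); last by lia.
move=> ->; rewrite -addnA -(rw_nth (X 0%N) rq); last by lia.
by rewrite nth_cat ltnNge h.
Qed.

Lemma theta_inj (A : eqType) (X : nat -> A) (v : seq A) N (th : 'I_N -> seq A)
  (Hth : return_enum X v th) s t :
  flatten (map th s) = flatten (map th t) -> s = t.
Proof.
have Hth' := Hth; case: Hth' => Hinj Hrw _.
have pos i : (0 < size (th i))%N.
  have [q rq] : exists q, return_at X v q (th i) by apply/Hrw; exists i.
  by case: rq.
elim: s t => [|i s IH] [|j t] //=.
- by move/(congr1 size); rewrite /= size_cat; have := pos j; lia.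
- by move/(congr1 size); rewrite /= size_cat; have := pos i; lia.
move=> E.
case: (ltngtP (size (th i)) (size (th j))) => h.
- by case: (no_lt Hth h E).
- by case: (no_lt Hth h (esym E)).
have eij : th i = th j.
  by rewrite -(take_size_cat (flatten (map th s)) (erefl (size (th i)))) E h take_size_cat.
move: E; rewrite eij => /(congr1 (drop (size (th j)))); rewrite !drop_size_cat // => /IH ->.
by rewrite (Hinj _ _ eij).
Qed.


Lemma count_flatten (T : finType) (S : Type) (p : pred S) (f : T -> seq S) s :
  count p (flatten (map f s)) = (\sum_(x : T) count_mem x s * count p (f x))%N.
Proof.
elim: s => [|y s IH] /=; first by rewrite big1.
rewrite count_cat IH.
rewrite [RHS](eq_bigr _ (fun x _ => mulnDl _ _ _)).
rewrite big_split /=; congr (_ + _)%N.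
rewrite (bigD1 y) //= eqxx mul1n big1 ?addn0 // => x /negbTE.
by rewrite eq_sym => ->.
Qed.

Definition Mat N M (f : 'I_N -> seq 'I_M) : 'M[algC]_(M, N) :=
  \matrix_(j, i) (count_mem j (f i))%:R.

Definition compS N M K (f : 'I_M -> seq 'I_K) (g : 'I_N -> seq 'I_M) : 'I_N -> seq 'I_K :=
  fun i => flatten (map f (g i)).

Lemma Mat_comp N M K (f : 'I_M -> seq 'I_K) (g : 'I_N -> seq 'I_M) :
  Mat (compS f g) = Mat f *m Mat g.
Proof.
apply/matrixP => j i; rewrite !mxE /compS count_flatten natr_sum.
by apply: eq_bigr => l _; rewrite !mxE natrM mulrC.
Qed.

Fixpoint iterSub N (s : 'I_N -> seq 'I_N) K : 'I_N -> seq 'I_N :=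
  if K is K'.+1 then compS s (iterSub s K') else fun i => [:: i].

Arguments iterSub {N}.

Lemma iterS_eig N (s : 'I_N -> seq 'I_N) (x : 'rV[algC]_N) z K :
  x *m Mat s = z *: x -> x *m Mat (iterSub s K) = z ^+ K *: x.
Proof.
move=> H; elim: K => [|K IH] /=.
  have -> : Mat (fun i : 'I_N => [:: i]) = 1%:M.
    apply/matrixP => j i; rewrite !mxE /= addn0.
    by rewrite eq_sym; case: eqP.
  by rewrite mulmx1 expr0 scale1r.
by rewrite Mat_comp mulmxA H -scalemxAl IH scalerA exprS.
Qed.

Lemma eig_transfer Nu Nv (Mu : 'M[algC]_Nu) (Mv : 'M_Nv) (B : 'M_(Nu,Nv))
  (C : 'M_(Nv,Nu)) (P : 'M_Nu) K z :
  B *m Mv = Mu *m B -> B *m C = P ->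
  (forall x : 'rV_Nu, x *m Mu = z *: x -> x *m P = z ^+ K *: x) ->
  z != 0 -> eigenvalue Mu z -> eigenvalue Mv z.
Proof.
move=> HB HC HP z0 /eigenvalueP [x Hx x0]; apply/eigenvalueP.
exists (x *m B); first by rewrite -mulmxA HB mulmxA Hx scalemxAl.
apply/negP => /eqP y0.
have := HP x Hx; rewrite -HC mulmxA y0 mul0mx => /esym /eqP.
by rewrite scaler_eq0 expf_eq0 (negbTE z0) (negbTE x0) andbF.
Qed.


Lemma theta_morph (A : Type) N M (th' : 'I_M -> seq A) (th : 'I_N -> seq A)
  (mu : 'I_N -> seq 'I_M) (F : seq A -> seq A) :
  F [::] = [::] -> (forall s t, F (s ++ t) = F s ++ F t) ->
  (forall i, flatten (map th' (mu i)) = F (th i)) ->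
  forall s, flatten (map th' (flatten (map mu s))) = F (flatten (map th s)).
Proof.
move=> F0 Fc Hmu; elim=> [|i s IH] //=.
by rewrite map_cat flatten_cat Hmu IH Fc.
Qed.

Lemma theta_iterS (A : Type) (tau : A -> seq A) N (th : 'I_N -> seq A) (s : 'I_N -> seq 'I_N)
  (Hs : return_subst th tau s) K i :
  flatten (map th (iterSub s K i)) = Tk tau K (th i).
Proof.
elim: K i => [|K IH] i /=; first by rewrite cats0.
rewrite /compS (@theta_morph _ _ _ th th s (Tm tau)) //; last first.
  by move=> s1 t1; rewrite /Tm map_cat flatten_cat.
by rewrite IH.
Qed.

Lemma direction (A : eqType) X (tau : A -> seq A) (u : seq A) Nu thu su Nv thv sv
  (Hthu : return_enum X u thu) (Hsu : return_subst thu tau su)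
  (Hsv : return_subst thv tau sv) k k'
  (mu : 'I_Nu -> seq 'I_Nv) (nu : 'I_Nv -> seq 'I_Nu)
  (Hmu : forall i, flatten (map thv (mu i)) = Tk tau k (thu i))
  (Hnu : forall j, flatten (map thu (nu j)) = Tk tau k' (thv j)) z :
  z != 0 -> eigenvalue (ret_matrix su) z -> eigenvalue (ret_matrix sv) z.
Proof.

apply: (@eig_transfer _ _ _ _ (Mat nu) (Mat mu) (Mat (iterSub su (k + k'))) (k + k')).
- have E : forall j, compS nu sv j = compS su nu j.
    move=> j; apply: (theta_inj Hthu).
    rewrite /compS (theta_morph (Tk_nil tau k') (Tk_cat tau k') Hnu).
    rewrite (@theta_morph _ _ _ thu thu su (Tm tau)) //; last first.
      by move=> s1 t1; rewrite /Tm map_cat flatten_cat.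
    by rewrite Hsv Hnu /Tk -iterSr.
  rewrite /ret_matrix -!/(Mat _) -!Mat_comp.
  by apply/matrixP => a b; rewrite !mxE E.
- have E : forall i, compS nu mu i = iterSub su (k + k') i.
    move=> i; apply: (theta_inj Hthu).
    rewrite /compS (theta_morph (Tk_nil tau k') (Tk_cat tau k') Hnu).
    by rewrite Hmu (theta_iterS Hsu) /Tk -iterD addnC.
  by rewrite -Mat_comp; apply/matrixP => a b; rewrite !mxE E.
- move=> x; exact: (@iterS_eig _ su x z (k + k')).
Qed.


Lemma const_case (A : finType) (tau : A -> seq A) a :
  tau a = [:: a] -> primitive tau -> forall b, b = a.
Proof.
move=> ha [k Hk] b.
have col : forall k i, (subst_matrix tau ^+ k) i (enum_rank a) = (i == enum_rank a)%:R.
  elim=> [|k' IH] i.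
    by rewrite expr0 mxE; case: eqP.
  rewrite exprSr -mulmxE mxE (bigD1 (enum_rank a)) //= big1 ?addr0.
    by rewrite IH mxE enum_rankK ha /= eqxx mulr1.
  move=> l hl; rewrite [subst_matrix _ _ _]mxE enum_rankK ha /=.
  case: eqP => [el|]; last by rewrite mulr0.
  by move: hl; rewrite el enum_valK eqxx.
have := Hk (enum_rank b) (enum_rank a); rewrite col.
by case: eqP => [/enum_rank_inj //|_]; rewrite ltxx.
Qed.

Lemma grow (A : eqType) (tau : A -> seq A) (Hne : forall b, tau b != [::]) a w :
  tau a = a :: w -> w != [::] -> forall k, (k < size (Tk tau k [:: a]))%N.
Proof.
move=> ha wn; elim=> [|k IH] //.
rewrite /Tk iterSr -/(Tk tau k _).
have -> : Tm tau [:: a] = [:: a] ++ w by rewrite /Tm /= cats0 ha.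
rewrite Tk_cat size_cat.
have := size_Tk Hne k w; move: wn; case: w {ha} => // c r _ /=; lia.
Qed.

Lemma occ_transfer (A : finType) (tau : A -> seq A) a X
  (Hne : forall b, tau b != [::]) (Ha : exists w, tau a = a :: w)
  (Hprim : primitive tau) (Hfix : is_fixed_point tau a X) n m (Hn : (0 < n)%N) :
  exists k, forall p, occurs X (mkseq X n) p ->
    occurs X (mkseq X m) (size (Tk tau k (mkseq X p))).
Proof.
case: Ha => w hw; case: (eqVneq w [::]) => [w0|wn].
  have cst := const_case (a := a) (tau := tau); rewrite hw w0 in cst.
  exists 0%N => p _; apply/(occursP _ a) => k; rewrite size_mkseq => hk.
  by rewrite nth_mkseq // (cst erefl Hprim (X _)) (cst erefl Hprim (X k)).
exists m => p op.
move/eqP: op; rewrite size_mkseq => E.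
have T1 := Tk_slice Hfix m p n; rewrite E in T1.
have T2 := Tk_fix Hfix m n.
have big : (m < size (Tk tau m (mkseq X n)))%N.
  apply: (leq_trans (grow Hne hw wn m)).
  have -> : mkseq X n = [:: a] ++ slice X 1 (n - 1).
    by rewrite -(subnKC Hn) mkseq_add /= subnKC //; case: Hfix => ->.
  by rewrite Tk_cat size_cat leq_addr.
apply/(occursP _ a) => k; rewrite size_mkseq => hk.
rewrite nth_mkseq //.
have := congr1 (fun s => nth a s k) T1; rewrite nth_slice; last exact: ltn_trans hk big.
move=> <-; rewrite {1}T2 nth_mkseq //; exact: ltn_trans hk big.
Qed.

Lemma mu_exists (A : eqType) (tau : A -> seq A) a X (Hfix : is_fixed_point tau a X)
  (u v : seq A) Nu (thu : 'I_Nu -> seq A) Nv (thv : 'I_Nv -> seq A)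
  (Hthu : return_enum X u thu) (Hthv : return_enum X v thv) k
  (Hocc : forall p, occurs X u p -> occurs X v (size (Tk tau k (mkseq X p)))) :
  exists mu : 'I_Nu -> seq 'I_Nv, forall i, flatten (map thv (mu i)) = Tk tau k (thu i).
Proof.
have H : forall i, exists s : seq 'I_Nv, flatten (map thv s) == Tk tau k (thu i).
  move=> i; have Hthu' := Hthu; case: Hthu' => _ Hrw _.
  have [p [o1 wpos o2 _ ew]] : exists p, return_at X u p (thu i) by apply/Hrw; exists i.
  have o2' := Hocc _ o2; rewrite Lk_add -ew in o2'.
  have [s Hs] := decomp Hthv (Hocc _ o1) o2'.
  exists s; rewrite Hs; apply/eqP.
  by rewrite [in RHS]ew (Tk_slice Hfix) -ew.
by exists (fun i => xchoose (H i)) => i; apply/eqP/(xchooseP (H i)).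
Qed.


Unset Implicit Arguments. Set Strict Implicit.

Theorem corollary9 (A : finType) (tau : A -> seq A) (a : A) (X : nat -> A)
  (Hne : forall b, tau b != [::])
  (Ha : exists w, tau a = a :: w)
  (Hprim : primitive tau)
  (Hfix : is_fixed_point tau a X)
  (n m : nat) (Hn : (0 < n)%N) (Hm : (0 < m)%N)
  (Nu : nat) (thu : 'I_Nu -> seq A) (su : 'I_Nu -> seq 'I_Nu)
  (Nv : nat) (thv : 'I_Nv -> seq A) (sv : 'I_Nv -> seq 'I_Nv)
  (Hthu : return_enum X (mkseq X n) thu) (Hsu : return_subst thu tau su)
  (Hthv : return_enum X (mkseq X m) thv) (Hsv : return_subst thv tau sv) :
  forall z : algC, z != 0 ->
    eigenvalue (ret_matrix su) z = eigenvalue (ret_matrix sv) z.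
Proof.
move=> z z0.
have [k1 H1] := occ_transfer Hne Ha Hprim Hfix m Hn.
have [k2 H2] := occ_transfer Hne Ha Hprim Hfix n Hm.
have [mu Hmu] := mu_exists Hfix Hthu Hthv H1.
have [nu Hnu] := mu_exists Hfix Hthv Hthu H2.
apply/idP/idP.
- exact: (direction Hthu Hsu Hsv Hmu Hnu z0).
- exact: (direction Hthv Hsv Hsu Hnu Hmu z0).
Qed.
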